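(* Let $p > 3$ be a prime number. Then $p$ is a Cantor prime if and only if $p$ satisfies an equation of the form $2pK + 1 = 3^q$, where $q$ is the multiplicative order of $3$ modulo $p$ and $K$ is a sum of distinct powers $3^d$ with integer exponents $0 \le d < q$ (equivalently, $K = \sum_{i=1}^{n} 3^{d_i}$ for some $n \ge 1$ and distinct integers $0 \le d_i < q$).
   Context: The middle-third Cantor set $\mathcal{C}_3$ is the set of points of $[0,1]$ admitting a base-$3$ expansion $\sum_{k\ge 1} a_k 3^{-k}$ with every digit $a_k \in \{0,2\}$. A Cantor prime is a prime number $p$ such that $1/p \in \mathcal{C}_3$. *)

(* Defs.v *)
From Stdlib Require Import Reals ZArith Znumtheory List Arith Lia Lra.
Import ListNotations.
Open Scope R_scope.

(* x lies in the middle-third Cantor set: x = sum_{k>=1} a_k 3^{-k}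
   with every digit a_k in {0,2}.  Here [a k] is the digit a_{k+1}. *)
Definition in_cantor3 (x : R) : Prop :=
  exists a : nat -> nat,
    (forall k, a k = 0%nat \/ a k = 2%nat) /\
    infinite_sum (fun k => INR (a k) / 3 ^ (S k)) x.

Definition cantor_prime (p : nat) : Prop :=
  prime (Z.of_nat p) /\ in_cantor3 (/ INR p).

Definition mult_order (a p q : nat) : Prop :=
  (0 < q)%nat /\ (a ^ q mod p)%nat = 1%nat /\
  forall r, (0 < r < q)%nat -> (a ^ r mod p)%nat <> 1%nat.

Definition sum_distinct_pow3_below (K q : nat) : Prop :=
  exists ds : list nat,
    ds <> [] /\ NoDup ds /\ Forall (fun d => (d < q)%nat) ds /\
    K = fold_right (fun d acc => (3 ^ d + acc)%nat) 0%nat ds.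

(* Main.v *)
Require Import Defs.
From Stdlib Require Import Reals ZArith Znumtheory List Arith Lia Lra.
From Stdlib Require Import Reals ZArith Znumtheory List Arith.
Import ListNotations.

Fixpoint G (a : nat -> nat) (n : nat) : nat :=
  match n with 0 => 0 | S n => 3 * G a n + a n end%nat.
Fixpoint H (b : nat -> nat) (m : nat) : nat :=
  match m with 0 => 0 | S m => H b m + b m * 3 ^ m end%nat.
Definition F (ds : list nat) : nat := fold_right (fun d acc => (3 ^ d + acc)%nat) 0%nat ds.
Definition bd (ds : list nat) (d : nat) : nat := if in_dec Nat.eq_dec d ds then 2%nat else 0%nat.

Lemma GH a b q : (forall k, (k < q)%nat -> a k = b (q - 1 - k)%nat) ->
  forall j m, (j + m = q)%nat -> (G a j * 3 ^ m + H b m = H b q)%nat.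
Proof.
  intros Hab j; induction j; intros m Hm.
  - simpl in Hm; subst; simpl; lia.
  - rewrite <- (IHj (S m)) by lia. cbn [G H]. rewrite Hab by lia.
    replace (q - 1 - j)%nat with m by lia. rewrite Nat.pow_succ_r'. ring.
Qed.

Lemma H_ext b b' m : (forall d, (d < m)%nat -> b d = b' d) -> H b m = H b' m.
Proof. induction m; intros E; simpl; auto. rewrite IHm by (intros; apply E; lia). rewrite E by lia. auto. Qed.

Lemma H_add b1 b2 m : H (fun d => b1 d + b2 d)%nat m = (H b1 m + H b2 m)%nat.
Proof. induction m; simpl; auto. rewrite IHm. ring. Qed.

Lemma H_ind x m : H (fun d => if Nat.eq_dec d x then 2 else 0)%nat m =
  (if lt_dec x m then 2 * 3 ^ x else 0)%nat.
Proof.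
  induction m; simpl. destruct (lt_dec x 0); lia.
  rewrite IHm. destruct (Nat.eq_dec m x); destruct (lt_dec x m); destruct (lt_dec x (S m)); subst; lia.
Qed.

Lemma H_F ds q : NoDup ds -> Forall (fun d => (d < q)%nat) ds -> H (bd ds) q = (2 * F ds)%nat.
Proof.
  induction ds as [|x ds IH]; intros Hnd Hf.
  - simpl. transitivity (H (fun _ => 0%nat) q).
    + apply H_ext. intros d _. unfold bd. destruct in_dec; [contradiction|auto].
    + clear. induction q; simpl; lia.
  - inversion Hnd; subst. inversion Hf; subst.
    transitivity (H (fun d => (if Nat.eq_dec d x then 2 else 0) + bd ds d)%nat q).
    + apply H_ext. intros d _. unfold bd.
      destruct (in_dec Nat.eq_dec d (x :: ds)) as [i|i]; destruct (Nat.eq_dec d x);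
      destruct (in_dec Nat.eq_dec d ds); simpl in i; subst; try tauto; intuition; subst; tauto.
    + rewrite H_add, H_ind, IH by auto. destruct lt_dec; simpl; lia.
Qed.

Open Scope R_scope.
Fixpoint Sr (f : nat -> R) (n : nat) : R :=
  match n with 0%nat => 0 | S n => Sr f n + f n end.

Lemma sum_Sr f n : sum_f_R0 f n = Sr f (S n).
Proof. induction n; simpl in *; [lra|]. rewrite IHn. simpl. lra. Qed.

Definition fa (a : nat -> nat) (k : nat) : R := INR (a k) / 3 ^ (S k).

Lemma pow3_pos n : 0 < 3 ^ n.
Proof. apply pow_lt; lra. Qed.

Lemma Sr_G a n : Sr (fa a) n = INR (G a n) / 3 ^ n.
Proof.
  induction n; cbn [Sr G]. simpl; unfold Rdiv; lra.
  rewrite IHn. unfold fa. rewrite plus_INR, mult_INR.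
  replace (INR 3) with 3 by (simpl; lra).
  pose proof (pow3_pos n). rewrite <- tech_pow_Rmult. field. lra.
Qed.

Lemma Sr_mono f n i : (forall k, 0 <= f k) -> Sr f n <= Sr f (n + i).
Proof.
  intros Hf. induction i. rewrite Nat.add_0_r; lra.
  rewrite Nat.add_succ_r. simpl. specialize (Hf (n+i)%nat). lra.
Qed.

Lemma Sr_up f n i : (forall k, f k <= 2 / 3 ^ (S k)) ->
  Sr f (n + i) <= Sr f n + / 3 ^ n - / 3 ^ (n + i).
Proof.
  intros Hf. induction i. rewrite Nat.add_0_r; lra.
  rewrite Nat.add_succ_r. simpl. specialize (Hf (n+i)%nat).
  pose proof (pow3_pos (n+i)).
  assert (E1: 2 / 3 ^ S (n+i) = 2/3 * / 3 ^ (n+i)) by (simpl; field; lra).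
  assert (E2: / (3 * 3 ^ (n+i)) = 1/3 * / 3 ^ (n+i)) by (field; lra).
  rewrite E1 in Hf. rewrite E2. lra.
Qed.

Lemma lim_bounds f x n : (forall k, 0 <= f k) -> (forall k, f k <= 2 / 3 ^ (S k)) ->
  infinite_sum f x -> Sr f n <= x <= Sr f n + / 3 ^ n.
Proof.
  intros H0 H2 Hs. pose proof (pow3_pos n).
  split.
  - destruct (Rle_or_lt (Sr f n) x) as [h|h]; auto.
    destruct (Hs (Sr f n - x)) as [N HN]. lra.
    specialize (HN (N + n)%nat ltac:(lia)). rewrite sum_Sr in HN. unfold R_dist in HN.
    apply Rabs_def2 in HN.
    pose proof (Sr_mono f n (S N) H0) as HM. replace (n + S N)%nat with (S (N+n)) in HM by lia. lra.
  - destruct (Rle_or_lt x (Sr f n + / 3 ^ n)) as [h|h]; auto.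
    destruct (Hs (x - (Sr f n + / 3 ^ n))) as [N HN]. lra.
    specialize (HN (N + n)%nat ltac:(lia)). rewrite sum_Sr in HN. unfold R_dist in HN.
    apply Rabs_def2 in HN.
    pose proof (Sr_up f n (S N) H2) as HM. replace (n + S N)%nat with (S (N+n)) in HM by lia.
    pose proof (pow3_pos (S (N+n))). assert (0 < / 3 ^ S (N+n)) by (apply Rinv_0_lt_compat; lra).
    lra.
Qed.

Lemma shift a q : (forall k, a (k + q)%nat = a k) ->
  forall n, Sr (fa a) (n + q) = Sr (fa a) q + Sr (fa a) n / 3 ^ q.
Proof.
  intros Hp n. pose proof (pow3_pos q). induction n.
  - simpl. unfold Rdiv. rewrite Rmult_0_l, Rplus_0_r. reflexivity.
  - replace (S n + q)%nat with (S (n + q)) by lia. cbn [Sr]. rewrite IHn.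
    unfold fa. rewrite Hp. replace (S (n + q)) with (S n + q)%nat by lia.
    rewrite pow_add. pose proof (pow3_pos (S n)). field. lra.
Qed.

Lemma periodic_sum a q x : (0 < q)%nat -> (forall k, a (k + q)%nat = a k) ->
  Sr (fa a) q = x - x / 3 ^ q -> 0 < x -> infinite_sum (fa a) x.
Proof.
  intros Hq Hp HSq Hx.
  assert (Hf0 : forall k, 0 <= fa a k).
  { intro k. unfold fa. apply Rmult_le_pos. apply pos_INR. left. apply Rinv_0_lt_compat, pow3_pos. }
  pose proof (pow3_pos q) as Pq.
  assert (HE : forall n, 0 <= x - Sr (fa a) n /\ (x - Sr (fa a) n) * 3 ^ n <= x * 3 ^ q).
  { intro n. induction n as [n IH] using (well_founded_induction lt_wf).
    destruct (lt_dec n q) as [l|l].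
    - pose proof (Sr_mono (fa a) n (q - n) Hf0) as M1. replace (n + (q - n))%nat with q in M1 by lia.
      pose proof (Sr_mono (fa a) 0 n Hf0) as M2. simpl in M2.
      assert (0 <= x / 3 ^ q) by (unfold Rdiv; apply Rmult_le_pos; [lra| left; apply Rinv_0_lt_compat; lra]).
      split. lra. apply Rmult_le_compat. lra. left; apply pow3_pos. lra.
      apply Rle_pow; lia || lra.
    - destruct (IH (n - q)%nat ltac:(lia)) as [IH1 IH2].
      replace n with (n - q + q)%nat by lia. rewrite shift by auto. rewrite HSq.
      pose proof (pow3_pos (n - q)).
      split.
      + replace (x - (x - x / 3 ^ q + Sr (fa a) (n - q) / 3 ^ q)) with ((x - Sr (fa a) (n - q)) / 3 ^ q) by (field; lra).
        unfold Rdiv; apply Rmult_le_pos; [lra| left; apply Rinv_0_lt_compat; lra].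
      + rewrite pow_add.
        replace ((x - (x - x / 3 ^ q + Sr (fa a) (n - q) / 3 ^ q)) * (3 ^ (n - q) * 3 ^ q)) with
          ((x - Sr (fa a) (n - q)) * 3 ^ (n - q)) by (field; lra). lra. }
  intros eps Heps.
  destruct (INR_unbounded (x * 3 ^ q / eps)) as [N HN].
  exists N. intros n Hn. rewrite sum_Sr. unfold R_dist.
  destruct (HE (S n)) as [E1 E2].
  rewrite Rabs_minus_sym, Rabs_right by lra.
  assert (INR N < 3 ^ S n).
  { replace 3 with (INR 3) by (simpl; lra). rewrite <- pow_INR. apply lt_INR.
    pose proof (Nat.pow_gt_lin_r 3 (S n) ltac:(lia)). lia. }
  pose proof (pow3_pos (S n)).
  assert (x * 3 ^ q < eps * INR N).
  { apply (Rmult_lt_compat_r eps) in HN; auto. unfold Rdiv in HN.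
    rewrite Rmult_assoc, Rinv_l, Rmult_1_r in HN by lra. lra. }
  destruct (Rlt_or_le (x - Sr (fa a) (S n)) eps) as [h|h]; auto.
  apply (Rmult_le_compat_r (3 ^ S n)) in h; [|lra].
  assert (eps * INR N < eps * 3 ^ S n) by (apply Rmult_lt_compat_l; lra). lra.
Qed.

Close Scope R_scope.
Theorem theorem2p1 (p q : nat) :
  prime (Z.of_nat p) -> (3 < p)%nat -> mult_order 3 p q ->
  (cantor_prime p <->
   exists K : nat, sum_distinct_pow3_below K q /\ (2 * p * K + 1 = 3 ^ q)%nat).
Proof.
  intros Hpr Hp3 [Hq [Hmod _]].
  assert (Hdm : (3 ^ q = p * (3 ^ q / p) + 1)%nat).
  { pose proof (Nat.div_mod_eq (3 ^ q) p) as D. rewrite Hmod in D. exact D. }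
  assert (HP : (0 < INR p)%R) by (apply lt_0_INR; lia).
  pose proof (pow3_pos q) as PT.
  assert (HTq : (1 < 3 ^ q)%nat).
  { destruct q. lia. rewrite Nat.pow_succ_r'. pose proof (Nat.pow_gt_lin_r 3 q). lia. }
  split.
  - intros [_ [a [Ha Hs]]].
    assert (Ha2 : forall k, (a k <= 2)%nat) by (intro k; destruct (Ha k); lia).
    assert (Hb := lim_bounds (fa a) (/ INR p) q).
    destruct Hb as [B1 B2].
    + intro k. unfold fa. apply Rmult_le_pos. apply pos_INR. left. apply Rinv_0_lt_compat, pow3_pos.
    + intro k. unfold fa. unfold Rdiv. apply Rmult_le_compat_r. left. apply Rinv_0_lt_compat, pow3_pos.
      replace 2%R with (INR 2) by (simpl; lra). apply le_INR. auto.
    + exact Hs.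
    + rewrite Sr_G in B1, B2.
      set (g := G a q) in *.
      assert (R1 : (INR g * INR p <= 3 ^ q)%R).
      { assert (C := Rmult_le_compat_r (3^q * INR p) _ _ ltac:(apply Rmult_le_pos; lra) B1).
        replace (INR g / 3^q * (3^q * INR p))%R with (INR g * INR p)%R in C by (field; lra).
        replace (/ INR p * (3^q * INR p))%R with (3^q)%R in C by (field; lra). exact C. }
      assert (R2 : (3 ^ q <= INR g * INR p + INR p)%R).
      { assert (C := Rmult_le_compat_r (3^q * INR p) _ _ ltac:(apply Rmult_le_pos; lra) B2).
        replace ((INR g / 3^q + / 3^q) * (3^q * INR p))%R with (INR g * INR p + INR p)%R in C by (field; lra).
        replace (/ INR p * (3^q * INR p))%R with (3^q)%R in C by (field; lra). exact C. }
      replace 3%R with (INR 3) in R1, R2 by (simpl; lra).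
      rewrite <- pow_INR, <- mult_INR in R1, R2. rewrite <- plus_INR in R2.
      apply INR_le in R1. apply INR_le in R2.
      assert (Hg : g = (3 ^ q / p)%nat) by nia.
      set (ds := filter (fun d => Nat.eqb (a (q - 1 - d)%nat) 2) (seq 0 q)).
      assert (Hnd : NoDup ds) by (apply NoDup_filter, seq_NoDup).
      assert (Hfa : Forall (fun d => (d < q)%nat) ds).
      { apply Forall_forall. intros d Hd. apply filter_In in Hd. destruct Hd as [Hd _].
        apply in_seq in Hd. lia. }
      assert (HgH : g = H (bd ds) q).
      { rewrite <- (GH a (bd ds) q) with (j := q) (m := 0%nat).
        - simpl. lia.
        - intros k Hk. unfold bd. destruct in_dec as [i|i].
          + apply filter_In in i. destruct i as [_ i]. apply Nat.eqb_eq in i.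
            replace (q - 1 - (q - 1 - k))%nat with k in i by lia. auto.
          + destruct (Ha k) as [e|e]; auto. exfalso. apply i. apply filter_In. split.
            apply in_seq; lia. apply Nat.eqb_eq. replace (q - 1 - (q - 1 - k))%nat with k by lia. auto.
        - lia. }
      rewrite H_F in HgH by auto.
      exists (F ds). split.
      * exists ds. repeat split; auto.
        intro E. rewrite E in HgH. simpl in HgH. nia.
      * nia.
  - intros [K [[ds [Hne [Hnd [Hfa HK]]]] HKe]].
    split; auto.
    set (a := fun k => bd ds (q - 1 - k mod q)%nat).
    exists a. split.
    + intro k. unfold a, bd. destruct in_dec; auto.
    + apply (periodic_sum a q); auto.
      * intro k. unfold a. replace (k + q)%nat with (k + 1 * q)%nat by lia. rewrite Nat.Div0.mod_add. auto.
      * rewrite Sr_G.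
        assert (E : G a q = (2 * K)%nat).
        { rewrite HK. fold (F ds). rewrite <- H_F with (q := q) by auto.
          rewrite <- (GH a (bd ds) q) with (j := q) (m := 0%nat).
          - simpl. lia.
          - intros k Hk. unfold a. rewrite Nat.mod_small by auto. auto.
          - lia. }
        rewrite E.
        assert (E2 : (INR (2 * K) * INR p + 1 = 3 ^ q)%R).
        { replace 3%R with (INR 3) by (simpl; lra). rewrite <- pow_INR, <- mult_INR.
          rewrite <- S_INR. f_equal. lia. }
        replace (INR (2 * K)) with ((3 ^ q - 1) / INR p)%R by (rewrite <- E2; field; lra).
        field. lra.
      * apply Rinv_0_lt_compat; auto.
Qed.
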